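(* Let $\overline{x}$ be any set of variables and let $\Sigma(\overline{x})$ be any set of $\mathcal{L}$-equations in the variables $\overline{x}$. Then $\Sigma$ is satisfiable if, and only if, every finite subset of $\Sigma$ is satisfiable.
   Context: An MV-algebra is an algebra $(A,\oplus,\neg,0)$ of type $(2,1,0)$ such that $(A,\oplus,0)$ is a commutative monoid, $\neg\neg a=a$, $a\oplus\neg 0=\neg 0$, and $\neg(\neg a\oplus b)\oplus b=\neg(\neg b\oplus a)\oplus a$ for all $a,b$. Derived operations: $1:=\neg 0$, $a\odot b:=\neg(\neg a\oplus\neg b)$, $a\ominus b:=a\odot\neg b$, $a\to b:=\neg a\oplus b$, $a\vee b:=\neg(\neg a\oplus b)\oplus b$, $a\wedge b:=\neg(\neg a\vee\neg b)$ (these are the join and meet of a lattice order $\le$), and $d(a,b):=(a\ominus b)\oplus(b\ominus a)$. Let $\mathcal{L}=\{\delta,\oplus,\neg,0\}$ be the language of type $(\omega,2,1,0)$ ($\delta$ takes a countably infinite sequence of arguments). For an element $x$ write $\tfrac12(x):=\delta(x,0,0,\dots)$. A $\delta$-algebra is an $\mathcal{L}$-algebra whose $\{\oplus,\neg,0\}$-reduct is an MV-algebra and which satisfies, for all $x,y$ and all sequences $\vec x=(x_1,x_2,\dots)$, $\vec y$: (i) $d(\delta(\vec x),\delta(x_1,0,0,\dots))=\delta(0,x_2,x_3,\dots)$; (ii) $\tfrac12(\delta(\vec x))=\delta(\tfrac12(x_1),\tfrac12(x_2),\dots)$; (iii) $\delta(x,x,\dots)=x$; (iv) $\delta(0,\vec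 x)=\tfrac12(\delta(\vec x))$; (v) $\delta(x_1,x_2,\dots)\le\delta(x_1\oplus y_1,x_2\oplus y_2,\dots)$; (vi) $\tfrac12(x\ominus y)=\tfrac12(x)\ominus\tfrac12(y)$. $\Delta$ denotes the class of $\delta$-algebras. The standard $\delta$-algebra is $[0,1]$ with $x\oplus y=\min\{1,x+y\}$, $\neg x=1-x$, $0$, and $\delta(\vec x)=\sum_{i\ge1}x_i/2^i$. For a set of variables $\overline{x}$, $T(\overline{x})$ is the algebra of $\mathcal{L}$-terms in $\overline{x}$ (absolutely free $\mathcal{L}$-algebra). An $\mathcal{L}$-equation in $\overline{x}$ is a pair $s\approx t$ of terms in $T(\overline{x})$. For an $\mathcal{L}$-algebra $A$ and an assignment $f\colon\overline{x}\to A$, let $\bar f\colon T(\overline{x})\to A$ be the unique homomorphism extending $f$; write $A,f\models\Sigma$ if $\bar f(s)=\bar f(t)$ for every $s\approx t$ in $\Sigma$. A set of equations $\Sigma(\overline{x})$ (a theory) is satisfiable if there exist a $\delta$-algebra $A$ with at least two elements and an assignment $f\colon\overline{x}\to A$ with $A,f\models\Sigma$. *)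

(* Defs.v *)
From Stdlib Require Import List.
Set Implicit Arguments.

Record DeltaAlgebra : Type := {
  carrier :> Type;
  oplus : carrier -> carrier -> carrier;
  neg : carrier -> carrier;
  zero : carrier;
  delta : (nat -> carrier) -> carrier;  (* x_1, x_2, ... is (x 0), (x 1), ... *)
  oplus_assoc : forall a b c, oplus a (oplus b c) = oplus (oplus a b) c;
  oplus_comm : forall a b, oplus a b = oplus b a;
  oplus_zero : forall a, oplus a zero = a;
  neg_neg : forall a, neg (neg a) = a;
  oplus_one : forall a, oplus a (neg zero) = neg zero;
  lukasiewicz : forall a b,
    oplus (neg (oplus (neg a) b)) b = oplus (neg (oplus (neg b) a)) a;
  (* delta axioms, stated with the derived operations unfolded below *)
  delta_i : forall x : nat -> carrier,
    let ominus a b := neg (oplus (neg a) (neg (neg b))) in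
    let d a b := oplus (ominus a b) (ominus b a) in
    d (delta x) (delta (fun n => match n with 0 => x 0 | _ => zero end))
    = delta (fun n => match n with 0 => zero | _ => x n end);
  delta_ii : forall x : nat -> carrier,
    let half a := delta (fun n => match n with 0 => a | _ => zero end) in
    half (delta x) = delta (fun n => half (x n));
  delta_iii : forall a, delta (fun _ => a) = a;
  delta_iv : forall x : nat -> carrier,
    let half a := delta (fun n => match n with 0 => a | _ => zero end) in
    delta (fun n => match n with 0 => zero | S m => x m end) = half (delta x);
  delta_v : forall x y : nat -> carrier,
    let join a b := oplus (neg (oplus (neg a) b)) b in
    join (delta x) (delta (fun n => oplus (x n) (y n)))
    = delta (fun n => oplus (x n) (y n));
  delta_vi : forall a b,
    let ominus a b := neg (oplus (neg a) (neg (neg b))) in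
    let half a := delta (fun n => match n with 0 => a | _ => zero end) in
    half (ominus a b) = ominus (half a) (half b)
}.

Section Derived.
Variable A : DeltaAlgebra.
Definition one : A := neg A (zero A).
Definition odot (a b : A) : A := neg A (oplus A (neg A a) (neg A b)).
Definition ominus (a b : A) : A := odot a (neg A b).
Definition mvjoin (a b : A) : A := oplus A (neg A (oplus A (neg A a) b)) b.
Definition mvle (a b : A) : Prop := mvjoin a b = b.
Definition dist (a b : A) : A := oplus A (ominus a b) (ominus b a).
Definition half (a : A) : A := delta A (fun n => match n with 0 => a | _ => zero A end).
End Derived.

Inductive term (V : Type) : Type :=
  | tvar : V -> term V
  | tdelta : (nat -> term V) -> term V
  | toplus : term V -> term V -> term V
  | tneg : term V -> term V
  | tzero : term V.

Arguments tzero {V}.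

Fixpoint eval (V : Type) (A : DeltaAlgebra) (f : V -> A) (t : term V) : A :=
  match t with
  | tvar v => f v
  | tdelta s => delta A (fun n => @eval V A f (s n))
  | toplus s u => oplus A (@eval V A f s) (@eval V A f u)
  | tneg s => neg A (@eval V A f s)
  | tzero => zero A
  end.

Definition equation (V : Type) := (term V * term V)%type.

Definition models (V : Type) (A : DeltaAlgebra) (f : V -> A)
  (Sigma : equation V -> Prop) : Prop :=
  forall e, Sigma e -> @eval V A f (fst e) = @eval V A f (snd e).

Definition satisfiable (V : Type) (Sigma : equation V -> Prop) : Prop :=
  exists (A : DeltaAlgebra),
    (exists a b : A, a <> b) /\ exists f : V -> A, @models V A f Sigma.
Arguments eval {V A} f t.

(* Main.v *)
Require Import Defs.
From Stdlib Require Import List Lia Arith Classical FunctionalExtensionality ProofIrrelevance IndefiniteDescription PropExtensionality.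

Module MVc.

Section MV.
Variable A : DeltaAlgebra.
Local Notation "x ⊕ y" := (oplus A x y) (at level 50, left associativity).
Local Notation "¬ x" := (neg A x) (at level 35, right associativity).
Local Notation z := (zero A).

Definition e1 : A := ¬ z.
Definition od (a b : A) : A := ¬(¬a ⊕ ¬b).
Definition om (a b : A) : A := ¬(¬a ⊕ b).
Definition jn (a b : A) : A := om a b ⊕ b.
Definition mt (a b : A) : A := od a (¬a ⊕ b).
Definition le (a b : A) : Prop := ¬a ⊕ b = e1.

Lemma opA a b c : a ⊕ (b ⊕ c) = a ⊕ b ⊕ c. Proof. apply oplus_assoc. Qed.
Lemma opC a b : a ⊕ b = b ⊕ a. Proof. apply oplus_comm. Qed.
Lemma op0 a : a ⊕ z = a. Proof. apply oplus_zero. Qed.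
Lemma nn a : ¬¬a = a. Proof. apply neg_neg. Qed.
Lemma z_op a : z ⊕ a = a. Proof. rewrite opC; apply op0. Qed.
Lemma n1 : ¬ e1 = z. Proof. unfold e1; apply nn. Qed.
Lemma op1 a : a ⊕ e1 = e1. Proof. apply oplus_one. Qed.
Lemma one_op a : e1 ⊕ a = e1. Proof. rewrite opC; apply op1. Qed.
Lemma op_neg a : a ⊕ ¬a = e1.
Proof.
  pose proof (lukasiewicz A e1 a) as H. fold e1 in H.
  rewrite n1, z_op in H. rewrite (op1 (¬a)), op1 in H. rewrite opC. exact H.
Qed.
Lemma neg_op a : ¬a ⊕ a = e1. Proof. rewrite opC; apply op_neg. Qed.
Lemma op_swap a b c : a ⊕ b ⊕ c = a ⊕ c ⊕ b.
Proof. rewrite <- !opA, (opC b c). reflexivity. Qed.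

Lemma le_refl a : le a a. Proof. apply neg_op. Qed.
Lemma jn_comm a b : jn a b = jn b a. Proof. apply lukasiewicz. Qed.
Lemma le_jn a b : le a b -> jn a b = b.
Proof. unfold le, jn, om; intro H; rewrite H, n1, z_op; reflexivity. Qed.
Lemma jn_le a b : jn a b = b -> le a b.
Proof.
  intro H; unfold le. rewrite <- H at 1. rewrite jn_comm. unfold jn.
  rewrite opA, op_swap, neg_op, one_op. reflexivity.
Qed.
Lemma le_ex a b : le a b -> a ⊕ om b a = b.
Proof. intro H. rewrite opC. fold (jn b a). rewrite jn_comm. apply le_jn; auto. Qed.
Lemma ex_le a c : le a (a ⊕ c).
Proof. unfold le. rewrite opA, neg_op, one_op. reflexivity. Qed.
Lemma le_op_r a b : le a (a ⊕ b). Proof. apply ex_le. Qed.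
Lemma le_op_l a b : le b (a ⊕ b). Proof. rewrite opC; apply ex_le. Qed.
Lemma le_antisym a b : le a b -> le b a -> a = b.
Proof.
  intros H1 H2. apply le_jn in H1. apply le_jn in H2. rewrite <- H1, <- H2 at 1.
  apply jn_comm.
Qed.
Lemma le_trans a b c : le a b -> le b c -> le a c.
Proof.
  intros H1 H2. apply le_ex in H1. apply le_ex in H2. rewrite <- H2, <- H1.
  rewrite <- opA. apply ex_le.
Qed.
Lemma op_mono_l a b c : le a b -> le (a ⊕ c) (b ⊕ c).
Proof. intros H. apply le_ex in H. rewrite <- H. rewrite op_swap. apply ex_le. Qed.
Lemma op_mono_r a b c : le a b -> le (c ⊕ a) (c ⊕ b).
Proof. intros H. rewrite (opC c a), (opC c b). apply op_mono_l; auto. Qed.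
Lemma op_mono a b c d : le a b -> le c d -> le (a ⊕ c) (b ⊕ d).
Proof.
  intros H1 H2. apply le_trans with (b ⊕ c). apply op_mono_l; auto. apply op_mono_r; auto.
Qed.
Lemma neg_anti a b : le a b -> le (¬b) (¬a).
Proof. unfold le; intro H. rewrite nn, opC. exact H. Qed.
Lemma neg_anti' a b : le (¬b) (¬a) -> le a b.
Proof. intro H. apply neg_anti in H. rewrite !nn in H. exact H. Qed.
Lemma le_one a : le a e1. Proof. unfold le. apply op1. Qed.
Lemma le_zero a : le z a. Proof. unfold le. fold e1. apply one_op. Qed.
Lemma le_z a : le a z -> a = z.
Proof. intro H. apply le_antisym; auto. apply le_zero. Qed.
Lemma le_e1 a : le e1 a -> a = e1.
Proof. intro H. apply le_antisym; auto. apply le_one. Qed.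

Lemma jn_ub_r a b : le b (jn a b). Proof. apply le_op_l. Qed.
Lemma jn_ub_l a b : le a (jn a b). Proof. rewrite jn_comm. apply jn_ub_r. Qed.
Lemma om_mono_l a b c : le a b -> le (om a c) (om b c).
Proof. intro H. unfold om. apply neg_anti. apply op_mono_l. apply neg_anti; auto. Qed.
Lemma om_anti_r a b c : le b c -> le (om a c) (om a b).
Proof. intro H. unfold om. apply neg_anti. apply op_mono_r; auto. Qed.
Lemma jn_lub a b c : le a c -> le b c -> le (jn a b) c.
Proof.
  intros H1 H2. unfold jn. apply le_trans with (om c b ⊕ b).
  apply op_mono_l. apply om_mono_l; auto.
  fold (jn c b). rewrite jn_comm, le_jn; auto. apply le_refl.
Qed.
Lemma jn_mono a b c : le a b -> le (jn a c) (jn b c).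
Proof.
  intro H. apply jn_lub. apply le_trans with b; auto. apply jn_ub_l. apply jn_ub_r.
Qed.

Lemma odC a b : od a b = od b a. Proof. unfold od. rewrite opC; auto. Qed.
Lemma odA a b c : od a (od b c) = od (od a b) c.
Proof. unfold od. rewrite !nn, opA. reflexivity. Qed.
Lemma od_mono_l a b c : le a b -> le (od a c) (od b c).
Proof. intro H. unfold od. apply neg_anti, op_mono_l, neg_anti; auto. Qed.
Lemma od_neg a : od a (¬a) = z.
Proof. unfold od. rewrite nn, neg_op. apply n1. Qed.
Lemma od_le_l a b : le (od a b) a.
Proof. unfold od. apply neg_anti'. rewrite nn. apply le_op_r. Qed.
Lemma od_le_r a b : le (od a b) b.
Proof. rewrite odC. apply od_le_l. Qed.

Lemma mt_jn a b : mt a b = ¬ jn (¬b) (¬a).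
Proof. unfold mt, jn, od, om. rewrite !nn. rewrite (opC (¬a) b). f_equal. apply opC. Qed.
Lemma mt_comm a b : mt a b = mt b a.
Proof. rewrite !mt_jn, jn_comm. reflexivity. Qed.
Lemma mt_lb_r a b : le (mt a b) b.
Proof. rewrite mt_jn. apply neg_anti'. rewrite nn. apply jn_ub_l. Qed.
Lemma mt_lb_l a b : le (mt a b) a.
Proof. rewrite mt_comm. apply mt_lb_r. Qed.
Lemma mt_le a b : le a b -> mt a b = a.
Proof. intro H. rewrite mt_jn. rewrite le_jn. apply nn. apply neg_anti; auto. Qed.
Lemma mt_glb a b c : le c a -> le c b -> le c (mt a b).
Proof.
  intros H1 H2. rewrite mt_jn. apply neg_anti'. rewrite nn. apply jn_lub; apply neg_anti; auto.
Qed.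
Lemma mt_mono a b c : le a b -> le (mt a c) (mt b c).
Proof. intro H. apply mt_glb. apply le_trans with a; auto. apply mt_lb_l. apply mt_lb_r. Qed.

Lemma resid1 a b c : le (od a b) c -> le a (¬b ⊕ c).
Proof.
  intro H. apply le_trans with (¬b ⊕ od a b); [|apply op_mono_r; auto].
  rewrite opC. apply le_trans with (jn a (¬b)). apply jn_ub_l.
  unfold jn, om, od. rewrite opC. apply le_refl.
Qed.
Lemma resid2 a b c : le a (¬b ⊕ c) -> le (od a b) c.
Proof.
  intro H. apply le_trans with (od (¬b ⊕ c) b). apply od_mono_l; auto.
  rewrite odC. fold (mt b c). apply mt_lb_r.
Qed.
Lemma om_od a b : om a b = od a (¬b).
Proof. unfold om, od. rewrite nn. reflexivity. Qed.
Lemma oresid1 a b c : le (om a b) c -> le a (b ⊕ c).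
Proof. rewrite om_od. intro H. apply resid1 in H. rewrite nn in H. exact H. Qed.
Lemma oresid2 a b c : le a (b ⊕ c) -> le (om a b) c.
Proof. rewrite om_od. intro H. apply resid2. rewrite nn. exact H. Qed.
Lemma om_z a b : le a b -> om a b = z.
Proof. unfold le, om. intro H. rewrite H. apply n1. Qed.
Lemma z_om a b : om a b = z -> le a b.
Proof. unfold le, om. intro H. rewrite <- (nn (¬a ⊕ b)), H. reflexivity. Qed.
Lemma om_le a b : le (om a b) a.
Proof. apply oresid2. apply le_op_l. Qed.
Lemma om_split a b : le b a -> a = b ⊕ om a b.
Proof.
  intro H. rewrite opC. fold (jn a b). rewrite jn_comm, le_jn; auto.
Qed.
Lemma om_op a b : om (a ⊕ b) b = mt a (¬b).
Proof.
  rewrite mt_jn, nn. rewrite jn_comm. unfold jn, om. rewrite nn. reflexivity.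
Qed.
Lemma om_op_ex a b : le a (¬b) -> om (a ⊕ b) b = a.
Proof. intro H. rewrite om_op. apply mt_le; auto. Qed.
Lemma om_tri a b c : le (om a c) (om a b ⊕ om b c).
Proof.
  apply oresid2. apply le_trans with (jn a b). apply jn_ub_l.
  unfold jn at 1. rewrite opC.
  apply le_trans with (jn b c ⊕ om a b). apply op_mono_l. apply jn_ub_l.
  unfold jn. rewrite (opC (om b c) c), <- opA, (opC (om b c) (om a b)). apply le_refl.
Qed.
Lemma om_op_compat a b c d : le (om (a ⊕ b) (c ⊕ d)) (om a c ⊕ om b d).
Proof.
  apply oresid2. apply le_trans with (jn a c ⊕ jn b d).
  apply op_mono; apply jn_ub_l.
  unfold jn. rewrite (opC (om a c) c), (opC (om b d) d).
  rewrite <- !opA. rewrite (opA (om a c) d). rewrite (opC (om a c) d). rewrite <- !opA. apply le_refl.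
Qed.
Lemma om_neg a b : om (¬a) (¬b) = om b a.
Proof. unfold om. rewrite nn, opC. reflexivity. Qed.
Lemma om_self a : om a a = z.
Proof. apply om_z, le_refl. Qed.
Lemma om_om a b c : om (om a b) c = om a (b ⊕ c).
Proof. unfold om. rewrite nn, opA. reflexivity. Qed.

Lemma key_id a b : od (od a b) (a ⊕ b) = od a b.
Proof.
  assert (Hb : b = od (a ⊕ b) (od a b ⊕ ¬a)).
  { assert (E : ¬(a ⊕ b) ⊕ b = od a b ⊕ ¬a).
    { pose proof (lukasiewicz A (¬a) b) as H. rewrite nn in H. rewrite H.
      unfold od. rewrite (opC (¬b) (¬a)). reflexivity. }
    rewrite <- E. fold (mt (a ⊕ b) b). rewrite mt_comm, mt_le; auto. apply le_op_l. }
  assert (Hm : od a (od a b ⊕ ¬a) = od a b).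
  { rewrite opC. fold (mt a (od a b)). rewrite mt_comm. apply mt_le. apply od_le_l. }
  set (X := od a b ⊕ ¬a) in *.
  assert (E : od a b = od a (od (a ⊕ b) X)). { rewrite <- Hb. reflexivity. }
  rewrite E at 2. rewrite (odA a (a ⊕ b) X), (odC a (a ⊕ b)), <- (odA (a ⊕ b) a X), Hm. apply odC.
Qed.
Lemma key_id' a b : a ⊕ b ⊕ od a b = a ⊕ b.
Proof.
  pose proof (key_id (¬a) (¬b)) as H.
  assert (H0 : od (¬a) (¬b) = ¬(a ⊕ b)) by (unfold od; rewrite !nn; reflexivity).
  rewrite H0 in H. unfold od at 1 in H. rewrite nn in H.
  rewrite <- (nn (a ⊕ b ⊕ od a b)). unfold od. rewrite H. apply nn.
Qed.
Lemma prelin x y : mt (om x y) (om y x) = z.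
Proof.
  unfold mt. 
  assert (E : ¬ om x y ⊕ om y x = ¬ om x y).
  { assert (E1 : ¬ om x y = ¬x ⊕ y) by (unfold om; apply nn). rewrite E1.
    assert (E2 : om y x = od (¬x) y) by (unfold om, od; rewrite nn, opC; reflexivity).
    rewrite E2. apply key_id'. }
  rewrite E. unfold od. rewrite nn, neg_op. apply n1.
Qed.
Lemma od_z a b : od a b = z -> le a (¬b).
Proof.
  intro H. assert (H0 : le a (¬b ⊕ z)) by (apply resid1; rewrite H; apply le_refl).
  rewrite op0 in H0. exact H0.
Qed.
Lemma mt_z_om p q : mt p q = z -> om p q = p.
Proof.
  intro H. apply le_antisym. apply om_le.
  unfold mt in H. apply od_z in H. unfold om. exact H.
Qed.
Lemma om_mt_z p q : om p q = p -> mt p q = z.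
Proof.
  intro H. unfold mt. assert (E : ¬p ⊕ q = ¬p).
  { rewrite <- H at 2. unfold om. rewrite nn. reflexivity. }
  rewrite E. unfold od. rewrite nn, neg_op. apply n1.
Qed.

Fixpoint nsum (k : nat) (x : A) : A :=
  match k with 0 => z | S k => x ⊕ nsum k x end.

Lemma nsum_add k j x : nsum (k + j) x = nsum k x ⊕ nsum j x.
Proof. induction k; simpl. rewrite z_op; auto. rewrite IHk, opA; auto. Qed.
Lemma nsum_mul k j x : nsum (k * j) x = nsum k (nsum j x).
Proof. induction k; simpl; auto. rewrite nsum_add, IHk; auto. Qed.
Lemma nsum_mono k j x : k <= j -> le (nsum k x) (nsum j x).
Proof.
  intro H. replace j with (k + (j - k)) by lia. rewrite nsum_add. apply le_op_r.
Qed.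
Lemma nsum_op_mono k x y : le x y -> le (nsum k x) (nsum k y).
Proof. intro H. induction k; simpl. apply le_refl. apply op_mono; auto. Qed.

Lemma om_nsum p q k : om p q = p -> om p (nsum k q) = p.
Proof.
  intro H. induction k; simpl. unfold om. rewrite op0, nn. reflexivity.
  rewrite <- om_om, H. exact IHk.
Qed.
Lemma mt_nsum p q n k : mt p q = z -> mt (nsum n p) (nsum k q) = z.
Proof.
  intro H. apply mt_z_om in H. apply (om_nsum _ _ k) in H. apply om_mt_z in H.
  rewrite mt_comm in H. apply mt_z_om in H. apply (om_nsum _ _ n) in H.
  apply om_mt_z in H. rewrite mt_comm in H. exact H.
Qed.
End MV.

End MVc.
Import MVc.

Module Dlt.

Section Delta.
Variable A : DeltaAlgebra.
Local Notation "x ⊕ y" := (oplus A x y) (at level 50, left associativity).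
Local Notation "¬ x" := (neg A x) (at level 35, right associativity).
Local Notation z := (zero A).
Local Notation le := (le A).
Local Notation om := (om A).
Local Notation e1 := (e1 A).
Local Notation hf := (half A).
Local Notation nsum := (nsum A).

Lemma half_le a : le (hf a) a.
Proof.
  pose proof (delta_v A (fun n => match n with 0 => a | _ => z end)
                        (fun n => match n with 0 => z | _ => a end)) as H.
  cbv beta zeta in H.
  assert (E : (fun n : nat => (match n with 0 => a | _ => z end) ⊕ (match n with 0 => z | _ => a end)) = (fun _ => a)).
  { apply functional_extensionality; intros [|n]. apply op0. apply z_op. }
  rewrite E, delta_iii in H. apply jn_le. exact H.
Qed.

Lemma half_half a : hf a ⊕ hf a = a.
Proof.
  pose proof (delta_i A (fun _ => a)) as H. cbv beta zeta in H.
  rewrite delta_iii in H.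
  pose proof (delta_iv A (fun _ => a)) as H2. cbv beta zeta in H2. rewrite delta_iii in H2.
  change (delta A (fun n => match n with 0 => z | _ => a end)) with
         (delta A (fun n => match n with 0 => z | S _ => a end)) in H.
  rewrite H2 in H. fold (hf a) in H.
  rewrite !nn in H. fold (om a (hf a)) in H. fold (om (hf a) a) in H.
  rewrite (om_z A (hf a) a (half_le a)), op0 in H.
  rewrite (om_split A a (hf a) (half_le a)) at 3. rewrite H. reflexivity.
Qed.

Lemma half_e1 : ¬ hf e1 = hf e1.
Proof.
  pose proof (delta_i A (fun _ => e1)) as H. cbv beta zeta in H.
  rewrite delta_iii in H.
  pose proof (delta_iv A (fun _ => e1)) as H2. cbv beta zeta in H2. rewrite delta_iii in H2.
  change (delta A (fun n => match n with 0 => z | _ => e1 end)) with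
         (delta A (fun n => match n with 0 => z | S _ => e1 end)) in H.
  rewrite H2 in H. fold (hf e1) in H.
  rewrite !nn in H. fold (om e1 (hf e1)) in H. fold (om (hf e1) e1) in H.
  rewrite (om_z A (hf e1) e1 (half_le e1)), op0 in H.
  unfold MVc.om in H. rewrite n1, z_op in H. exact H.
Qed.

Lemma half_mono a b : le a b -> le (hf a) (hf b).
Proof.
  intro Hab.
  pose proof (delta_v A (fun n => match n with 0 => a | _ => z end)
                        (fun n => match n with 0 => om b a | _ => z end)) as H.
  cbv beta zeta in H.
  assert (E : (fun n : nat => (match n with 0 => a | _ => z end) ⊕ (match n with 0 => om b a | _ => z end)) = (fun n => match n with 0 => b | _ => z end)).
  { apply functional_extensionality; intros [|n]. apply le_ex; auto. apply op0. }
  rewrite E in H. apply jn_le. exact H.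
Qed.

Lemma neg_half a : ¬ hf a = hf e1 ⊕ hf (¬a).
Proof.
  pose proof (delta_vi A e1 a) as H. cbv beta zeta in H. fold (hf e1) in H.
  change (delta A (fun n => match n with 0 => a | _ => z end)) with (hf a) in H.
  change (delta A (fun n => match n with 0 => ¬ (¬ e1 ⊕ ¬ ¬ a) | _ => z end)) with (hf (¬ (¬ e1 ⊕ ¬ ¬ a))) in H.
  rewrite !nn in H. rewrite half_e1 in H. unfold MVc.e1 in H. rewrite nn, z_op in H.
  fold e1 in H.
  assert (G : forall b, hf (¬ b) = ¬ (hf e1 ⊕ hf b)).
  { intro b. pose proof (delta_vi A e1 b) as H'. cbv beta zeta in H'.
    change (delta A (fun n => match n with 0 => b | _ => z end)) with (hf b) in H'.
    change (delta A (fun n => match n with 0 => ¬ (¬ e1 ⊕ ¬ ¬ b) | _ => z end)) with (hf (¬ (¬ e1 ⊕ ¬ ¬ b))) in H'.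
    fold (hf e1) in H'.
    rewrite !nn in H'. rewrite half_e1 in H'. unfold MVc.e1 in H'. rewrite nn, z_op in H'. exact H'. }
  specialize (G (¬a)). rewrite nn in G. rewrite G, nn. reflexivity.
Qed.

Lemma half_exact a b : le a (¬b) -> hf (a ⊕ b) = hf a ⊕ hf b.
Proof.
  intro Hab. pose proof (delta_vi A (a ⊕ b) b) as H. cbv beta zeta in H.
  change (delta A (fun n => match n with 0 => b | _ => z end)) with (hf b) in H.
  change (delta A (fun n => match n with 0 => a ⊕ b | _ => z end)) with (hf (a ⊕ b)) in H.
  change (delta A (fun n => match n with 0 => ¬ (¬ (a ⊕ b) ⊕ ¬ ¬ b) | _ => z end)) with (hf (¬ (¬ (a ⊕ b) ⊕ ¬ ¬ b))) in H.
  rewrite !nn in H. fold (om (a ⊕ b) b) in H. fold (om (hf (a ⊕ b)) (hf b)) in H.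
  rewrite om_op_ex in H; auto.
  rewrite (om_split A (hf (a ⊕ b)) (hf b)). rewrite <- H. apply opC.
  apply half_mono. apply le_op_l.
Qed.

Lemma half_z : hf z = z.
Proof.
  unfold half. transitivity (delta A (fun _ => z)). f_equal.
  apply functional_extensionality; intros [|n]; reflexivity. apply delta_iii.
Qed.

Lemma delta_split (x : nat -> A) :
  delta A x = hf (x 0) ⊕ hf (delta A (fun n => x (S n))).
Proof.
  pose proof (delta_i A x) as H. cbv beta zeta in H.
  pose proof (delta_iv A (fun n => x (S n))) as H2. cbv beta zeta in H2.
  assert (E : (fun n => match n with 0 => z | _ => x n end) = (fun n => match n with 0 => z | S m => x (S m) end)).
  { apply functional_extensionality; intros [|n]; reflexivity. }
  rewrite E, H2 in H. clear E H2.
  change (delta A (fun n => match n with 0 => x 0 | _ => z end)) with (hf (x 0)) in H.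
  fold (hf (delta A (fun n => x (S n)))) in H.
  assert (Hle : le (hf (x 0)) (delta A x)).
  { pose proof (delta_v A (fun n => match n with 0 => x 0 | _ => z end)
                        (fun n => match n with 0 => z | _ => x n end)) as H3.
    cbv beta zeta in H3.
    assert (E : (fun n : nat => (match n with 0 => x 0 | _ => z end) ⊕ (match n with 0 => z | _ => x n end)) = x).
    { apply functional_extensionality; intros [|n]. apply op0. apply z_op. }
    rewrite E in H3. apply jn_le. exact H3. }
  rewrite !nn in H. fold (om (delta A x) (hf (x 0))) in H. fold (om (hf (x 0)) (delta A x)) in H.
  rewrite (om_z A _ _ Hle), op0 in H.
  rewrite (om_split A (delta A x) (hf (x 0))) at 1; auto. rewrite H. reflexivity.
Qed.

Definition u (n : nat) : A := Nat.iter n hf e1.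
Lemma u_S n : u (S n) = hf (u n). Proof. reflexivity. Qed.
Lemma nsum1 x : nsum 1 x = x. Proof. simpl. apply op0. Qed.
Lemma nsum2 x : nsum 2 x = x ⊕ x. Proof. simpl. rewrite op0. reflexivity. Qed.
Lemma u_dbl n : nsum 2 (u (S n)) = u n.
Proof. rewrite nsum2, u_S. apply half_half. Qed.
Lemma pow_u n m : nsum (2 ^ n) (u (n + m)) = u m.
Proof.
  induction n. simpl. apply op0.
  replace (2 ^ S n) with (2 ^ n * 2) by (simpl; lia).
  rewrite nsum_mul. simpl (S n + m). rewrite u_dbl. exact IHn.
Qed.
Lemma q_top n : nsum (2 ^ n) (u n) = e1.
Proof. pose proof (pow_u n 0) as H. rewrite Nat.add_0_r in H. exact H. Qed.
Lemma q_refine n m k : nsum (k * 2 ^ m) (u (n + m)) = nsum k (u n).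
Proof. rewrite nsum_mul, Nat.add_comm, pow_u. reflexivity. Qed.

Lemma nsum_e1 k x : nsum k x = e1 -> forall j, nsum (k + j) x = e1.
Proof. intros H j. rewrite nsum_add, H. apply one_op. Qed.

Lemma half_nsum n k : ¬ u n = nsum (2 ^ n - 1) (u n) -> k <= 2 ^ n ->
  hf (nsum k (u n)) = nsum k (u (S n)).
Proof.
  intros Hn. induction k; intro Hk. simpl. apply half_z.
  simpl. rewrite opC. rewrite half_exact. rewrite IHk by lia. rewrite u_S. apply opC.
  rewrite Hn. apply nsum_mono. lia.
Qed.

Lemma neg_u n : ¬ u n = nsum (2 ^ n - 1) (u n).
Proof.
  induction n. simpl. unfold MVc.e1. apply nn.
  rewrite u_S, neg_half. rewrite IHn. rewrite half_nsum; auto.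
  2: lia.
  rewrite <- u_S. 
  assert (E : hf e1 = nsum (2 ^ n) (u (S n))).
  { pose proof (pow_u n 1) as H. replace (n + 1) with (S n) in H by lia. rewrite H. reflexivity. }
  rewrite E, <- nsum_add. f_equal. simpl. 
  pose proof (Nat.pow_nonzero 2 n). lia.
Qed.

Lemma neg_q n k : k <= 2 ^ n -> ¬ nsum k (u n) = nsum (2 ^ n - k) (u n).
Proof.
  induction k; intro Hk. simpl. rewrite Nat.sub_0_r, q_top. reflexivity.
  simpl. 
  assert (E : ¬ (u n ⊕ nsum k (u n)) = om (¬ nsum k (u n)) (u n)).
  { unfold MVc.om. rewrite nn, opC. reflexivity. }
  rewrite E, IHk by lia.
  replace (2 ^ n - k) with (S (2 ^ n - S k)) by lia. simpl. rewrite opC.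
  apply om_op_ex. rewrite neg_u. apply nsum_mono. lia.
Qed.

Lemma q_op n k j : nsum k (u n) ⊕ nsum j (u n) = nsum (Nat.min (2 ^ n) (k + j)) (u n).
Proof.
  rewrite <- nsum_add. destruct (Nat.le_gt_cases (k + j) (2 ^ n)).
  rewrite Nat.min_r; auto.
  rewrite Nat.min_l by lia. replace (k + j) with (2 ^ n + (k + j - 2 ^ n)) by lia.
  rewrite nsum_e1 with (k := 2 ^ n). symmetry; apply q_top. apply q_top.
Qed.

Lemma q_om n k j : j <= k <= 2 ^ n -> om (nsum k (u n)) (nsum j (u n)) = nsum (k - j) (u n).
Proof.
  intro H. unfold MVc.om. rewrite neg_q by lia. rewrite <- nsum_add.
  rewrite neg_q by lia. f_equal. lia.
Qed.
End Delta.

End Dlt.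
Import Dlt.

Module Idl.

Definition ZornStmt : Prop := forall (T : Type) (P : (T -> Prop) -> Prop),
  (forall F : (T -> Prop) -> Prop, (forall X, F X -> P X) ->
     (forall X Y, F X -> F Y -> (forall t, X t -> Y t) \/ (forall t, Y t -> X t)) ->
     P (fun t => exists X, F X /\ X t)) ->
  exists M, P M /\ forall B, (forall t, M t -> B t) -> (exists t, B t /\ ~ M t) -> ~ P B.

Section Idl.
Variable A : DeltaAlgebra.
Local Notation "x ⊕ y" := (oplus A x y) (at level 50, left associativity).
Local Notation "¬ x" := (neg A x) (at level 35, right associativity).
Local Notation z := (zero A).
Local Notation le := (le A).
Local Notation om := (om A).
Local Notation mt := (mt A).
Local Notation e1 := (e1 A).
Local Notation nsum := (nsum A).

Definition pideal (I : A -> Prop) : Prop :=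
  (forall a b, I a -> I b -> I (a ⊕ b)) /\ (forall a b, le a b -> I b -> I a) /\ ~ I e1.

Record maxideal (M : A -> Prop) : Prop := {
  mi_z : M z;
  mi_op : forall a b, M a -> M b -> M (a ⊕ b);
  mi_down : forall a b, le a b -> M b -> M a;
  mi_e1 : ~ M e1;
  mi_prime : forall x y, M (om x y) \/ M (om y x)
}.

Lemma exists_maxideal : ZornStmt -> e1 <> z -> exists M, maxideal M.
Proof.
  intros HZ Hnt.
  destruct (HZ A pideal) as [M [[Mop [Mdown Me1]] Mmax]].
  { intros F HF Htot. split; [|split].
    - intros a b [X [FX Xa]] [Y [FY Yb]].
      destruct (Htot X Y FX FY) as [HXY|HYX].
      + exists Y. split; auto. apply (proj1 (HF Y FY)); auto.
      + exists X. split; auto. apply (proj1 (HF X FX)); auto.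
    - intros a b Hab [X [FX Xb]]. exists X. split; auto.
      apply (proj1 (proj2 (HF X FX))) with b; auto.
    - intros [X [FX Xe]]. apply (proj2 (proj2 (HF X FX))); auto. }
  set (J := fun a x => exists m n, (M m \/ m = z) /\ le x (m ⊕ nsum n a)).
  assert (HJ : forall a, ~ M a -> exists m n, (M m \/ m = z) /\ m ⊕ nsum n a = e1).
  { intros a Ha. assert (~ pideal (J a)).
    { apply Mmax.
      - intros t Mt. exists t, 0. split; auto. simpl. rewrite op0. apply le_refl.
      - exists a. split; auto. exists z, 1. split; auto. simpl. rewrite op0, z_op. apply le_refl. }
    apply NNPP. intro Hn. apply H. split; [|split].
    - intros x y [m [n [Hm Hx]]] [m' [n' [Hm' Hy]]].
      exists (m ⊕ m'), (n + n'). split.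
      + destruct Hm as [Hm|Hm]; destruct Hm' as [Hm'|Hm']; subst;
        [left; apply Mop; auto | left; rewrite op0; auto | left; rewrite z_op; auto | right; apply z_op].
      + rewrite nsum_add. apply le_trans with ((m ⊕ nsum n a) ⊕ (m' ⊕ nsum n' a)).
        apply op_mono; auto.
        rewrite <- !opA. rewrite (opA A (nsum n a)), (opC A (nsum n a) m'), <- (opA A m'). apply le_refl.
    - intros x y Hxy [m [n [Hm Hy]]]. exists m, n. split; auto. apply le_trans with y; auto.
    - intros [m [n [Hm He]]]. apply Hn. exists m, n. split; auto.
      apply le_antisym; auto. apply le_one. }
  assert (Mz : M z).
  { apply NNPP; intro Hz. destruct (HJ z Hz) as [m [n [Hm He]]].
    assert (E : forall k, nsum k z = z) by (clear; induction k; simpl; auto; rewrite IHk; apply op0).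
    rewrite E, op0 in He. destruct Hm as [Hm|Hm]; subst. apply Me1; auto. auto. }
  assert (HJ' : forall a, ~ M a -> exists m n, M m /\ m ⊕ nsum n a = e1).
  { intros a Ha. destruct (HJ a Ha) as [m [n [[Hm|Hm] He]]]; exists m, n; subst; auto. }
  exists M. constructor; auto.
  intros x y. apply NNPP. intro Hn. apply not_or_and in Hn. destruct Hn as [H1 H2].
  destruct (HJ' _ H1) as [m1 [n1 [Hm1 He1]]]. destruct (HJ' _ H2) as [m2 [n2 [Hm2 He2]]].
  set (m := m1 ⊕ m2).
  assert (L1 : le (¬ m) (nsum n1 (om x y))).
  { unfold MVc.le. rewrite nn. apply le_e1. rewrite <- He1. unfold m.
    rewrite <- opA, (opC A m2), opA. apply le_op_r. }
  assert (L2 : le (¬ m) (nsum n2 (om y x))).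
  { unfold MVc.le. rewrite nn. apply le_e1. rewrite <- He2. unfold m.
    rewrite <- opA. apply le_op_l. }
  assert (L3 : le (¬ m) z).
  { rewrite <- (mt_nsum A _ _ n1 n2 (prelin A x y)). apply mt_glb; auto. }
  apply le_z in L3. apply Me1. replace e1 with m. unfold m; auto.
  rewrite <- (nn A m), L3. reflexivity.
Qed.

Lemma nontriv_e1 : (exists a b : A, a <> b) -> e1 <> z.
Proof.
  intros [a [b Hab]] He. apply Hab.
  assert (forall c, c = z). { intro c. apply le_z. rewrite <- He. apply le_one. }
  rewrite (H a), (H b). reflexivity.
Qed.
End Idl.

End Idl.
Import Idl.

From Stdlib Require Import Reals Lra.

Module Hom.
Local Open Scope R_scope.

Lemma pow2_pos n : 0 < 2 ^ n.
Proof. apply pow_lt; lra. Qed.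

Lemma small_pow e : 0 < e -> exists n, / 2 ^ n < e.
Proof.
  intro He. destruct (pow_lt_1_zero (/2)) with (y := e) as [N HN]; auto.
  rewrite Rabs_pos_eq; lra.
  exists N. specialize (HN N (le_n _)). rewrite pow_inv, Rabs_pos_eq in HN; auto.
  left; apply Rinv_0_lt_compat, pow2_pos.
Qed.

Lemma eps_le x y c : 0 <= c -> (forall n, x <= y + c / 2 ^ n) -> x <= y.
Proof.
  intros Hc H. destruct (Rle_dec x y); auto. exfalso.
  assert (Hd : 0 < (x - y) / (c + 1)).
  { apply Rdiv_lt_0_compat; lra. }
  destruct (small_pow _ Hd) as [m Hn]. specialize (H m). 
  pose proof (pow2_pos m).
  assert (c / 2 ^ m <= (c + 1) * / 2 ^ m - / 2 ^ m).
  { unfold Rdiv. nra. }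
  assert ((c + 1) * / 2 ^ m < x - y).
  { apply Rmult_lt_reg_r with (/ (c + 1)). apply Rinv_0_lt_compat; lra.
    replace ((c + 1) * / 2 ^ m * / (c + 1)) with (/ 2 ^ m) by (field; split; lra).
    exact Hn. }
  assert (0 < / 2 ^ m) by (apply Rinv_0_lt_compat; auto).
  lra.
Qed.

Definition dv (n k : nat) : R := INR k / 2 ^ n.

Lemma INR_pow2 n : INR (2 ^ n) = 2 ^ n.
Proof. rewrite pow_INR. reflexivity. Qed.

Lemma dv_le n k m j : (k * 2 ^ m <= j * 2 ^ n)%nat -> dv n k <= dv m j.
Proof.
  intro H. apply le_INR in H. rewrite !mult_INR, !INR_pow2 in H.
  unfold dv. pose proof (pow2_pos n). pose proof (pow2_pos m).
  apply Rmult_le_reg_r with (2 ^ n * 2 ^ m). nra.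
  replace (INR k / 2 ^ n * (2 ^ n * 2 ^ m)) with (INR k * 2 ^ m) by (field; lra).
  replace (INR j / 2 ^ m * (2 ^ n * 2 ^ m)) with (INR j * 2 ^ n) by (field; lra).
  exact H.
Qed.

Lemma dv_top n : dv n (2 ^ n) = 1.
Proof. unfold dv. rewrite INR_pow2. field. pose proof (pow2_pos n); lra. Qed.
Lemma dv_0 n : dv n 0 = 0.
Proof. unfold dv. simpl. unfold Rdiv. ring. Qed.
Lemma dv_S n k : dv n (S k) = dv n k + / 2 ^ n.
Proof. unfold dv. rewrite S_INR. unfold Rdiv. ring. Qed.
Lemma dv_add n k j : dv n (k + j) = dv n k + dv n j.
Proof. unfold dv. rewrite plus_INR. unfold Rdiv. ring. Qed.
Lemma dv_sub n k : (k <= 2 ^ n)%nat -> dv n (2 ^ n - k) = 1 - dv n k.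
Proof. intro H. unfold dv. rewrite minus_INR, INR_pow2 by auto. field. pose proof (pow2_pos n); lra. Qed.
Lemma dv_bound n k : (k <= 2 ^ n)%nat -> 0 <= dv n k <= 1.
Proof.
  intro H. rewrite <- (dv_top n). unfold dv. pose proof (pow2_pos n).
  apply le_INR in H. pose proof (pos_INR k). split.
  apply Rmult_le_pos; auto. left; apply Rinv_0_lt_compat; auto.
  apply Rmult_le_compat_r; auto. left; apply Rinv_0_lt_compat; auto.
Qed.

Section Hom.
Variable A : DeltaAlgebra.
Variable M : A -> Prop.
Hypothesis HM : maxideal A M.
Local Notation "x ⊕ y" := (oplus A x y) (at level 50, left associativity).
Local Notation "¬ x" := (Defs.neg A x) (at level 35, right associativity).
Local Notation z := (zero A).
Local Notation le := (MVc.le A).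
Local Notation om := (MVc.om A).
Local Notation e1 := (MVc.e1 A).
Local Notation nsum := (MVc.nsum A).
Local Notation hf := (half A).

Definition pre a b := M (om a b).
Definition q n k := nsum k (u A n).

Lemma M_nsum k x : M x -> M (nsum k x).
Proof. intro H. induction k; simpl. apply (mi_z _ _ HM). apply (mi_op _ _ HM); auto. Qed.
Lemma pre_refl a : pre a a.
Proof. unfold pre. rewrite om_self. apply (mi_z _ _ HM). Qed.
Lemma pre_trans a b c : pre a b -> pre b c -> pre a c.
Proof.
  unfold pre; intros H1 H2. apply (mi_down _ _ HM) with (om a b ⊕ om b c).
  apply om_tri. apply (mi_op _ _ HM); auto.
Qed.
Lemma pre_total a b : pre a b \/ pre b a. Proof. apply (mi_prime _ _ HM). Qed.
Lemma pre_op a b c d : pre a c -> pre b d -> pre (a ⊕ b) (c ⊕ d).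
Proof.
  unfold pre; intros H1 H2. apply (mi_down _ _ HM) with (om a c ⊕ om b d).
  apply om_op_compat. apply (mi_op _ _ HM); auto.
Qed.
Lemma pre_neg a b : pre a b -> pre (¬ b) (¬ a).
Proof. unfold pre. rewrite MVc.om_neg. auto. Qed.
Lemma le_pre a b : le a b -> pre a b.
Proof. intro H. unfold pre. rewrite MVc.om_z; auto. apply (mi_z _ _ HM). Qed.

Lemma q_top' n : q n (2 ^ n) = e1. Proof. apply q_top. Qed.
Lemma q_0 n : q n 0 = z. Proof. reflexivity. Qed.
Lemma q_01 : q 0 1 = e1. Proof. unfold q. simpl. apply op0. Qed.

Lemma u_notM n : ~ M (u A n).
Proof. intro H. apply (mi_e1 _ _ HM). rewrite <- (q_top' n). apply M_nsum; auto. Qed.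

Lemma q_strict n k j : (j < k <= 2 ^ n)%nat -> ~ pre (q n k) (q n j).
Proof.
  intros H Hp. unfold pre, q in Hp. rewrite q_om in Hp by lia.
  apply (u_notM n). apply (mi_down _ _ HM) with (nsum (k - j) (u A n)); auto.
  rewrite <- (nsum1 A (u A n)) at 1. apply nsum_mono. lia.
Qed.

Lemma q_cmp n k m j : pre (q n k) (q m j) -> (k <= 2 ^ n)%nat -> (j <= 2 ^ m)%nat ->
  (k * 2 ^ m <= j * 2 ^ n)%nat.
Proof.
  intros H Hk Hj. unfold q in H.
  rewrite <- (q_refine A n m k) in H. rewrite <- (q_refine A m n j) in H.
  rewrite (Nat.add_comm m n) in H.
  destruct (Nat.le_gt_cases (k * 2 ^ m) (j * 2 ^ n)) as [|Hlt]; auto. exfalso.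
  apply (q_strict (n + m) (k * 2 ^ m) (j * 2 ^ n)); auto.
  split; auto. rewrite Nat.pow_add_r. apply Nat.mul_le_mono_r. auto.
Qed.

Definition Sa (a : A) (r : R) : Prop :=
  exists n k, (k <= 2 ^ n)%nat /\ pre (q n k) a /\ r = dv n k.

Lemma Sa_bound a : bound (Sa a).
Proof. exists 1. intros r [n [k [Hk [_ ->]]]]. apply dv_bound; auto. Qed.
Lemma Sa_ne a : exists r, Sa a r.
Proof.
  exists 0. exists 0%nat, 0%nat. split; [simpl; lia|split]. unfold pre.
  rewrite MVc.om_z. apply (mi_z _ _ HM). apply le_zero. rewrite dv_0; auto.
Qed.

Definition h (a : A) : R := proj1_sig (completeness (Sa a) (Sa_bound a) (Sa_ne a)).

Lemma h_lub a : is_lub (Sa a) (h a).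
Proof. unfold h. destruct (completeness _ _ _); auto. Qed.

Lemma H1 a n k : (k <= 2 ^ n)%nat -> pre (q n k) a -> dv n k <= h a.
Proof. intros Hk Hp. apply (proj1 (h_lub a)). exists n, k. auto. Qed.
Lemma H2 a n k : (k <= 2 ^ n)%nat -> pre a (q n k) -> h a <= dv n k.
Proof.
  intros Hk Hp. apply (proj2 (h_lub a)). intros r [n' [k' [Hk' [Hp' ->]]]].
  apply dv_le. apply q_cmp; auto. apply pre_trans with a; auto.
Qed.
Lemma h_bounds a : 0 <= h a <= 1.
Proof.
  split. rewrite <- (dv_0 0). apply H1. simpl; lia. unfold pre. rewrite MVc.om_z.
  apply (mi_z _ _ HM). apply le_zero.
  replace 1 with (dv 0 1) by (unfold dv; simpl; field). apply H2. simpl; lia.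
  rewrite q_01. apply le_pre, le_one.
Qed.

Lemma bracket a n : exists k, (k <= 2 ^ n)%nat /\ pre (q n k) a /\ ((k = 2 ^ n)%nat \/ pre a (q n (S k))).
Proof.
  assert (G : forall K, (K <= 2 ^ n)%nat -> exists k, (k <= K)%nat /\ pre (q n k) a /\ (k = K \/ ~ pre (q n (S k)) a)).
  { induction K; intro HK.
    - exists 0%nat. repeat split; auto. unfold pre. rewrite MVc.om_z.
      apply (mi_z _ _ HM). apply le_zero.
    - destruct IHK as [k [Hk [Hp Hor]]]. lia.
      destruct Hor as [->|Hn].
      + destruct (classic (pre (q n (S K)) a)).
        * exists (S K). auto.
        * exists K. auto.
      + exists k. repeat split; auto. }
  destruct (G (2 ^ n)%nat (le_n _)) as [k [Hk [Hp Hor]]].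
  exists k. repeat split; auto. destruct Hor as [|Hn]; auto. right.
  destruct (pre_total a (q n (S k))); auto. contradiction.
Qed.

Lemma approx a n : exists k, (k <= 2 ^ n)%nat /\ pre (q n k) a /\
  dv n k <= h a /\ h a <= dv n k + / 2 ^ n.
Proof.
  destruct (bracket a n) as [k [Hk [Hp Hor]]]. exists k. repeat split; auto.
  apply H1; auto.
  destruct (Nat.eq_dec k (2 ^ n)) as [->|Hne].
  - rewrite dv_top. pose proof (h_bounds a). pose proof (pow2_pos n).
    assert (0 < / 2 ^ n) by (apply Rinv_0_lt_compat; auto). lra.
  - destruct Hor as [|Hp2]. contradiction. rewrite <- dv_S. apply H2; auto. lia.
Qed.

Lemma uniq a y :
  (forall n k, (k <= 2 ^ n)%nat -> pre (q n k) a -> dv n k <= y) ->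
  (forall n k, (k <= 2 ^ n)%nat -> pre a (q n k) -> y <= dv n k) ->
  y = h a.
Proof.
  intros P1 P2.
  assert (G : forall n, - / 2 ^ n <= y - h a <= / 2 ^ n).
  { intro n. destruct (bracket a n) as [k [Hk [Hp Hor]]].
    pose proof (P1 n k Hk Hp). pose proof (H1 a n k Hk Hp).
    destruct (Nat.eq_dec k (2 ^ n)) as [->|Hne].
    - assert (y <= 1). { rewrite <- (dv_top n). apply P2; auto. rewrite q_top'. apply le_pre, le_one. }
      pose proof (h_bounds a). rewrite dv_top in *. pose proof (pow2_pos n).
      assert (0 < / 2 ^ n) by (apply Rinv_0_lt_compat; auto).
      split; lra.
    - destruct Hor as [|Hp2]. contradiction.
      pose proof (P2 n (S k) ltac:(lia) Hp2). pose proof (H2 a n (S k) ltac:(lia) Hp2).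
      rewrite dv_S in *. split; lra. }
  apply Rle_antisym.
  - apply eps_le with 1. lra. intro n. specialize (G n).
    unfold Rdiv. lra.
  - apply eps_le with 1. lra. intro n. specialize (G n).
    unfold Rdiv. lra.
Qed.

Lemma h_neg a : h (¬ a) = 1 - h a.
Proof.
  symmetry. apply uniq.
  - intros n k Hk Hp. apply pre_neg in Hp. rewrite nn in Hp. unfold q in Hp.
    rewrite neg_q in Hp; auto. apply H2 in Hp. fold (q n (2 ^ n - k)) in Hp.
    rewrite dv_sub in Hp; auto. lra. lia.
  - intros n k Hk Hp. apply pre_neg in Hp. rewrite nn in Hp. unfold q in Hp.
    rewrite neg_q in Hp; auto. apply H1 in Hp. rewrite dv_sub in Hp; auto. lra. lia.
Qed.

Lemma h_mono a b : le a b -> h a <= h b.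
Proof.
  intro Hab. apply eps_le with 1. lra. intro n.
  destruct (approx a n) as [k [Hk [Hp [Hl Hu]]]].
  assert (dv n k <= h b). { apply H1; auto. apply pre_trans with a; auto. apply le_pre; auto. }
  unfold Rdiv. lra.
Qed.

Lemma h_op a b : h (a ⊕ b) = Rmin 1 (h a + h b).
Proof.
  symmetry. apply uniq.
  - intros n k Hk Hp. apply Rmin_glb. apply dv_bound; auto.
    apply eps_le with 2. lra. intro m.
    destruct (bracket a m) as [i [Hi [Hpi Hori]]].
    destruct (bracket b m) as [j [Hj [Hpj Horj]]].
    pose proof (h_bounds a). pose proof (h_bounds b). pose proof (dv_bound n k Hk).
    pose proof (pow2_pos m). assert (0 < 2 / 2 ^ m) by (apply Rdiv_lt_0_compat; lra).
    destruct Hori as [->|Hpi2].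
    { pose proof (H1 a m (2 ^ m) (le_n _) Hpi). rewrite dv_top in *. lra. }
    destruct Horj as [->|Hpj2].
    { pose proof (H1 b m (2 ^ m) (le_n _) Hpj). rewrite dv_top in *. lra. }
    pose proof (H1 a m i Hi Hpi). pose proof (H1 b m j Hj Hpj).
    assert (Hp3 : pre (q n k) (q m (Nat.min (2 ^ m) (S i + S j)))).
    { apply pre_trans with (a ⊕ b); auto. unfold q. rewrite <- q_op. apply pre_op; auto. }
    apply q_cmp in Hp3; auto. 2: apply Nat.le_min_l.
    apply dv_le in Hp3.
    assert (Hmn : dv m (Nat.min (2 ^ m) (S i + S j)) <= dv m (S i + S j)).
    { apply dv_le. apply Nat.mul_le_mono_r. apply Nat.le_min_r. }
    rewrite dv_add, !dv_S in Hmn. unfold Rdiv in *. lra.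
  - intros n k Hk Hp.
    destruct (Nat.eq_dec k (2 ^ n)) as [->|Hne].
    { rewrite dv_top. apply Rmin_l. }
    apply Rle_trans with (h a + h b). apply Rmin_r.
    apply eps_le with 2. lra. intro m.
    destruct (approx a m) as [i [Hi [Hpi [Hli Hui]]]].
    destruct (approx b m) as [j [Hj [Hpj [Hlj Huj]]]].
    assert (Hp3 : pre (q m (Nat.min (2 ^ m) (i + j))) (q n k)).
    { apply pre_trans with (a ⊕ b); auto. unfold q. rewrite <- q_op. apply pre_op; auto. }
    apply q_cmp in Hp3; auto. 2: apply Nat.le_min_l.
    destruct (Nat.le_gt_cases (2 ^ m) (i + j)) as [Hge|Hlt].
    { rewrite Nat.min_l in Hp3 by auto. exfalso.
      assert (k < 2 ^ n)%nat by lia.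
      assert (2 ^ m * 2 ^ n <= k * 2 ^ m)%nat by auto.
      rewrite (Nat.mul_comm k) in H0. apply Nat.mul_le_mono_pos_l in H0. lia.
      pose proof (Nat.pow_nonzero 2 m). lia. }
    rewrite Nat.min_r in Hp3 by lia. apply dv_le in Hp3. rewrite dv_add in Hp3.
    unfold Rdiv in *. lra.
Qed.

Lemma h_z : h z = 0.
Proof.
  pose proof (h_bounds z). apply Rle_antisym; try lra.
  rewrite <- (dv_0 0). apply H2. lia. apply pre_refl.
Qed.
Lemma h_e1 : h e1 = 1.
Proof. unfold MVc.e1. rewrite h_neg, h_z. ring. Qed.

Lemma h_u1 : h (hf e1) = / 2.
Proof.
  pose proof (h_neg (hf e1)) as H. rewrite half_e1 in H. lra.
Qed.

Lemma h_half a : h (hf a) = h a / 2.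
Proof.
  assert (L : h (hf a) <= / 2).
  { rewrite <- h_u1. apply h_mono. apply half_mono. apply le_one. }
  pose proof (h_op (hf a) (hf a)) as H. rewrite half_half in H.
  rewrite Rmin_right in H by lra. pose proof (h_bounds (hf a)). lra.
Qed.

Lemma h_delta_step (x : nat -> A) :
  h (delta A x) = h (x 0%nat) / 2 + h (delta A (fun n => x (S n))) / 2.
Proof.
  rewrite delta_split at 1. rewrite h_op, !h_half.
  pose proof (h_bounds (x 0%nat)). pose proof (h_bounds (delta A (fun n => x (S n)))).
  apply Rmin_right. lra.
Qed.

Lemma h_delta_partial (x : nat -> A) N :
  h (delta A x) = sum_f_R0 (fun i => h (x i) / 2 ^ S i) N
                  + h (delta A (fun i => x (S N + i)%nat)) / 2 ^ S N.
Proof.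
  revert x. induction N; intro x.
  - simpl. rewrite h_delta_step. field.
  - rewrite tech5. rewrite IHN. rewrite h_delta_step.
    replace (x (S N + 0)%nat) with (x (S N)) by (f_equal; lia).
    replace (fun n => x (S N + S n)%nat) with (fun i => x (S (S N) + i)%nat).
    2: { apply functional_extensionality; intro i. f_equal. lia. }
    simpl pow. field. apply pow_nonzero. lra.
Qed.

Lemma h_delta (x : nat -> A) :
  infinite_sum (fun i => h (x i) / 2 ^ S i) (h (delta A x)).
Proof.
  intros e He. destruct (small_pow e He) as [N HN]. exists N. intros n Hn.
  unfold Rdist. rewrite (h_delta_partial x n).
  replace (sum_f_R0 (fun i => h (x i) / 2 ^ S i) n -
     (sum_f_R0 (fun i => h (x i) / 2 ^ S i) n + h (delta A (fun i => x (S n + i)%nat)) / 2 ^ S n))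
   with (- (h (delta A (fun i => x (S n + i)%nat)) / 2 ^ S n)) by ring.
  rewrite Rabs_Ropp. pose proof (h_bounds (delta A (fun i => x (S n + i)%nat))).
  pose proof (pow2_pos (S n)).
  rewrite Rabs_pos_eq. 2: { apply Rmult_le_pos. lra. left; apply Rinv_0_lt_compat; auto. }
  apply Rle_lt_trans with (/ 2 ^ N); auto.
  apply Rle_trans with (/ 2 ^ S n).
  { unfold Rdiv. rewrite <- (Rmult_1_l (/ 2 ^ S n)) at 2. apply Rmult_le_compat_r; try lra.
    left; apply Rinv_0_lt_compat; auto. }
  apply Rinv_le_contravar. apply pow2_pos. apply Rle_pow. lra. lia.
Qed.

End Hom.

End Hom.
Import Hom.

From Coquelicot Require Import Coquelicot.

Module Std.
Local Open Scope R_scope.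

Definition geo (n : nat) : R := / 2 ^ S n.

Lemma geo_pos n : 0 < geo n.
Proof. unfold geo. apply Rinv_0_lt_compat. apply pow_lt. lra. Qed.

Lemma geo_S n : geo (S n) = / 2 * geo n.
Proof. unfold geo. rewrite <- Rinv_mult. f_equal. Qed.

Lemma geo_series : is_series geo 1.
Proof.
  pose proof (is_series_geom (/ 2)) as H.
  assert (Rabs (/ 2) < 1) by (rewrite Rabs_pos_eq; lra).
  specialize (H H0). apply (is_series_scal_l (/ 2)) in H.
  replace 1 with (scal (/ 2) (/ (1 - / 2))).
  2: { unfold scal; simpl. unfold mult; simpl. field. }
  apply is_series_ext with (2 := H). intro n. unfold scal; simpl. unfold mult; simpl.
  unfold geo. rewrite <- pow_inv. simpl. reflexivity.
Qed.

Lemma ex_geo : ex_series geo. Proof. exists 1. apply geo_series. Qed.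
Lemma Series_geo : Series geo = 1. Proof. apply is_series_unique, geo_series. Qed.

Definition bnd (c : nat -> R) := forall n, 0 <= c n <= 1.

Lemma ex_w c : bnd c -> ex_series (fun n => c n * geo n).
Proof.
  intro H. apply (@ex_series_le R_AbsRing R_CompleteNormedModule) with geo; auto. 2: apply ex_geo.
  intro n. change (norm (c n * geo n)) with (Rabs (c n * geo n)).
  specialize (H n). pose proof (geo_pos n).
  rewrite Rabs_pos_eq by nra. nra.
Qed.

Definition sdel (c : nat -> R) : R := Series (fun n => c n * geo n).

Lemma sdel_ext c d : (forall n, c n = d n) -> sdel c = sdel d.
Proof. intro H. unfold sdel. apply Series_ext. intro n. rewrite H. auto. Qed.

Lemma sdel_scal k c : sdel (fun n => k * c n) = k * sdel c.
Proof.
  unfold sdel. rewrite <- Series_scal_l. apply Series_ext. intro. ring.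
Qed.

Lemma sdel_const a : sdel (fun _ => a) = a.
Proof.
  unfold sdel. cbv beta. rewrite Series_scal_l, Series_geo. ring.
Qed.

Lemma sdel_zero c : (forall n, c n = 0) -> sdel c = 0.
Proof. intro H. rewrite (sdel_ext c (fun _ => 0)) by auto. apply sdel_const. Qed.

Lemma sdel_mono c d : bnd d -> (forall n, 0 <= c n <= d n) -> sdel c <= sdel d.
Proof.
  intros Hd H. unfold sdel. apply Series_le. 2: apply ex_w; auto.
  intro n. specialize (H n). pose proof (geo_pos n). split; nra.
Qed.

Lemma sdel_bnd c : bnd c -> 0 <= sdel c <= 1.
Proof.
  intro H. split.
  - rewrite <- (sdel_const 0). apply sdel_mono; auto. intro n; specialize (H n); lra.
  - rewrite <- (sdel_const 1). apply sdel_mono. intro; lra. intro n; specialize (H n); lra.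
Qed.

Lemma sdel_step c : bnd c -> sdel c = c 0%nat / 2 + sdel (fun n => c (S n)) / 2.
Proof.
  intro H. unfold sdel. rewrite Series_incr_1 by (apply ex_w; auto).
  rewrite (Series_ext _ (fun n => / 2 * (c (S n) * geo n))).
  2: { intro n. rewrite geo_S. ring. }
  rewrite Series_scal_l. unfold geo. simpl. field.
Qed.

Definition I01 := {x : R | 0 <= x <= 1}.
Definition sv (a : I01) : R := proj1_sig a.
Lemma sv_b (a : I01) : 0 <= sv a <= 1. Proof. exact (proj2_sig a). Qed.
Lemma I01_eq (a b : I01) : sv a = sv b -> a = b.
Proof.
  destruct a as [a Ha], b as [b Hb]. unfold sv; simpl. intro; subst. f_equal. apply proof_irrelevance.
Qed.

Lemma op_pf (a b : I01) : 0 <= Rmin 1 (sv a + sv b) <= 1.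
Proof.
  pose proof (sv_b a); pose proof (sv_b b). unfold Rmin. destruct (Rle_dec 1 (sv a + sv b)); lra.
Qed.
Definition sop (a b : I01) : I01 := exist _ (Rmin 1 (sv a + sv b)) (op_pf a b).
Lemma neg_pf (a : I01) : 0 <= 1 - sv a <= 1. Proof. pose proof (sv_b a); lra. Qed.
Definition sneg (a : I01) : I01 := exist _ (1 - sv a) (neg_pf a).
Lemma zero_pf : 0 <= 0 <= 1. Proof. lra. Qed.
Definition szero : I01 := exist _ 0 zero_pf.
Lemma bnd_sv (x : nat -> I01) : bnd (fun n => sv (x n)).
Proof. intro n. apply sv_b. Qed.
Lemma del_pf (x : nat -> I01) : 0 <= sdel (fun n => sv (x n)) <= 1.
Proof. apply sdel_bnd, bnd_sv. Qed.
Definition sdelta (x : nat -> I01) : I01 := exist _ (sdel (fun n => sv (x n))) (del_pf x).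

Lemma sv_op a b : sv (sop a b) = Rmin 1 (sv a + sv b). Proof. reflexivity. Qed.
Lemma sv_neg a : sv (sneg a) = 1 - sv a. Proof. reflexivity. Qed.
Lemma sv_zero : sv szero = 0. Proof. reflexivity. Qed.
Lemma sv_delta x : sv (sdelta x) = sdel (fun n => sv (x n)). Proof. reflexivity. Qed.

Lemma sd_step (x : nat -> I01) :
  sdel (fun n => sv (x n)) = sv (x 0%nat) / 2 + sdel (fun n => sv (x (S n))) / 2.
Proof. apply sdel_step, bnd_sv. Qed.

Lemma sv_half (a : I01) : sv (sdelta (fun n => match n with 0%nat => a | _ => szero end)) = sv a / 2.
Proof.
  rewrite sv_delta, sd_step. simpl. rewrite sdel_zero by (intro; reflexivity). field.
Qed.

Ltac rmin := unfold Rmin in *; repeat match goal with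
  | |- context [Rle_dec ?a ?b] =>
     lazymatch a with context [Rle_dec _ _] => fail | _ =>
     lazymatch b with context [Rle_dec _ _] => fail | _ => destruct (Rle_dec a b) end end
  end.

Ltac svs := repeat (rewrite ?sv_op, ?sv_neg, ?sv_zero).

Lemma s_assoc a b c : sop a (sop b c) = sop (sop a b) c.
Proof. apply I01_eq. svs. pose proof (sv_b a); pose proof (sv_b b); pose proof (sv_b c). rmin; lra. Qed.
Lemma s_comm a b : sop a b = sop b a.
Proof. apply I01_eq. svs. rewrite Rplus_comm. auto. Qed.
Lemma s_zero a : sop a szero = a.
Proof. apply I01_eq. svs. pose proof (sv_b a). rmin; lra. Qed.
Lemma s_nn a : sneg (sneg a) = a.
Proof. apply I01_eq. svs. ring. Qed.
Lemma s_one a : sop a (sneg szero) = sneg szero.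
Proof. apply I01_eq. svs. pose proof (sv_b a). rmin; lra. Qed.
Lemma s_luk a b : sop (sneg (sop (sneg a) b)) b = sop (sneg (sop (sneg b) a)) a.
Proof. apply I01_eq. svs. pose proof (sv_b a); pose proof (sv_b b). rmin; lra. Qed.

Lemma s_delta_i : forall x : nat -> I01,
    let ominus a b := sneg (sop (sneg a) (sneg (sneg b))) in
    let d a b := sop (ominus a b) (ominus b a) in
    d (sdelta x) (sdelta (fun n => match n with 0 => x 0%nat | _ => szero end))
    = sdelta (fun n => match n with 0 => szero | _ => x n end).
Proof.
  intros x om d. unfold d, om. apply I01_eq. svs.
  rewrite (sv_half (x 0%nat)). rewrite !sv_delta.
  rewrite (sd_step x). rewrite (sd_step (fun n => match n with 0%nat => szero | _ => x n end)).
  simpl (sv (match 0%nat with 0%nat => szero | _ => x 0%nat end)). rewrite sv_zero.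
  pose proof (sv_b (x 0%nat)). pose proof (sdel_bnd _ (bnd_sv (fun n => x (S n)))).
  simpl. rmin; lra.
Qed.

Lemma s_delta_ii : forall x : nat -> I01,
    let half a := sdelta (fun n => match n with 0 => a | _ => szero end) in
    half (sdelta x) = sdelta (fun n => half (x n)).
Proof.
  intros x hf. unfold hf. apply I01_eq. rewrite sv_half, !sv_delta.
  rewrite (sdel_ext (fun n => sv (sdelta (fun m => match m with 0%nat => x n | _ => szero end))) (fun n => / 2 * sv (x n))). rewrite sdel_scal. field.
  intro n. rewrite sv_half. field.
Qed.

Lemma s_delta_iii : forall a, sdelta (fun _ => a) = a.
Proof. intro a. apply I01_eq. rewrite sv_delta. apply sdel_const. Qed.

Lemma s_delta_iv : forall x : nat -> I01,
    let half a := sdelta (fun n => match n with 0 => a | _ => szero end) in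
    sdelta (fun n => match n with 0 => szero | S m => x m end) = half (sdelta x).
Proof.
  intros x hf. unfold hf. apply I01_eq. rewrite sv_half, !sv_delta.
  rewrite (sd_step (fun n => match n with 0%nat => szero | S m => x m end)). simpl.
  lra.
Qed.

Lemma s_delta_v : forall x y : nat -> I01,
    let join a b := sop (sneg (sop (sneg a) b)) b in
    join (sdelta x) (sdelta (fun n => sop (x n) (y n)))
    = sdelta (fun n => sop (x n) (y n)).
Proof.
  intros x y jn. unfold jn. apply I01_eq. svs. rewrite !sv_delta.
  assert (sdel (fun n => sv (x n)) <= sdel (fun n => sv (sop (x n) (y n)))).
  { apply sdel_mono. apply bnd_sv. intro n. svs. pose proof (sv_b (x n)); pose proof (sv_b (y n)).
    rmin; lra. }
  pose proof (sdel_bnd _ (bnd_sv x)). pose proof (sdel_bnd _ (bnd_sv (fun n => sop (x n) (y n)))).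
  rmin; lra.
Qed.

Lemma s_delta_vi : forall a b,
    let ominus a b := sneg (sop (sneg a) (sneg (sneg b))) in
    let half a := sdelta (fun n => match n with 0 => a | _ => szero end) in
    half (ominus a b) = ominus (half a) (half b).
Proof.
  intros a b om hf. unfold om, hf. apply I01_eq. svs. rewrite !sv_half. svs.
  pose proof (sv_b a); pose proof (sv_b b). rmin; lra.
Qed.

Definition StdA : DeltaAlgebra :=
  @Build_DeltaAlgebra I01 sop sneg szero sdelta s_assoc s_comm s_zero s_nn s_one s_luk
    s_delta_i s_delta_ii s_delta_iii s_delta_iv s_delta_v s_delta_vi.

Lemma StdA_nontriv : exists a b : StdA, a <> b.
Proof.
  exists szero, (sneg szero). intro H. apply (f_equal sv) in H. svs. simpl in H. lra.
Qed.

End Std.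
Import Std.

Module UC.
Local Open Scope R_scope.

Definition clampR (x : R) : R := Rmax 0 (Rmin 1 x).
Lemma clamp_pf x : 0 <= clampR x <= 1.
Proof. unfold clampR, Rmax, Rmin. repeat destruct Rle_dec; lra. Qed.
Definition clampV {V} (g : V -> R) : V -> StdA := fun v => exist _ (clampR (g v)) (clamp_pf (g v)).
Lemma clamp_id x : 0 <= x <= 1 -> clampR x = x.
Proof. unfold clampR, Rmax, Rmin. repeat destruct Rle_dec; lra. Qed.

Lemma clamp_lip a b : Rabs (clampR a - clampR b) <= Rabs (a - b).
Proof. unfold clampR, Rmax, Rmin. repeat destruct Rle_dec; unfold Rabs; repeat destruct Rcase_abs; lra. Qed.
Lemma rmin_lip x y : Rabs (Rmin 1 x - Rmin 1 y) <= Rabs (x - y).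
Proof. unfold Rmin. repeat destruct Rle_dec; unfold Rabs; repeat destruct Rcase_abs; lra. Qed.

Lemma sdel_close N e c d : bnd c -> bnd d -> 0 <= e ->
  (forall n, (n < N)%nat -> Rabs (c n - d n) <= e) -> Rabs (sdel c - sdel d) <= e + / 2 ^ N.
Proof.
  revert c d. induction N; intros c d Hc Hd He H.
  - simpl. pose proof (sdel_bnd c Hc). pose proof (sdel_bnd d Hd).
    rewrite Rinv_1. unfold Rabs; destruct Rcase_abs; lra.
  - rewrite (sdel_step c Hc), (sdel_step d Hd).
    assert (H1 : Rabs (c 0%nat - d 0%nat) <= e) by (apply H; lia).
    assert (H2 : Rabs (sdel (fun n => c (S n)) - sdel (fun n => d (S n))) <= e + / 2 ^ N).
    { apply IHN; auto. intro n; apply Hc. intro n; apply Hd. intros n Hn; apply H; lia. }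
    replace (c 0%nat / 2 + sdel (fun n => c (S n)) / 2 - (d 0%nat / 2 + sdel (fun n => d (S n)) / 2))
      with ((c 0%nat - d 0%nat) / 2 + (sdel (fun n => c (S n)) - sdel (fun n => d (S n))) / 2) by field.
    eapply Rle_trans. apply Rabs_triang.
    unfold Rdiv. rewrite !Rabs_mult. rewrite (Rabs_pos_eq (/ 2)) by lra.
    replace (/ 2 ^ S N) with (/ 2 ^ N * / 2). 2: { simpl. rewrite Rinv_mult. ring. }
    nra.
Qed.

Definition minl (l : list R) : R := fold_right Rmin 1 l.
Lemma minl_pos l : (forall x, In x l -> 0 < x) -> 0 < minl l.
Proof.
  induction l; simpl; intros H. lra. apply Rmin_glb_lt. apply H; auto. apply IHl; auto.
Qed.
Lemma minl_le l x : In x l -> minl l <= x.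
Proof.
  induction l; simpl; intros H. contradiction. destruct H as [->|H]. apply Rmin_l.
  eapply Rle_trans. apply Rmin_r. apply IHl; auto.
Qed.

Lemma UC V (t : term V) : forall eps, 0 < eps -> exists (S : list V) (eta : R), 0 < eta /\
  forall g g' : V -> R, (forall v, In v S -> Rabs (g v - g' v) < eta) ->
  Rabs (sv (Defs.eval (clampV g) t) - sv (Defs.eval (clampV g') t)) < eps.
Proof.
  induction t as [v | s IH | s IHs u IHu | s IHs |]; intros eps Heps.
  - exists (v :: nil), eps. split; auto. intros g g' H. simpl.
    unfold sv; simpl. eapply Rle_lt_trans. apply clamp_lip. apply H; simpl; auto.
  - destruct (small_pow (eps / 2)) as [N HN]. lra.
    assert (IH' : forall n, exists p : list V * R, 0 < snd p /\ forall g g' : V -> R,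
        (forall v, In v (fst p) -> Rabs (g v - g' v) < snd p) ->
        Rabs (sv (Defs.eval (clampV g) (s n)) - sv (Defs.eval (clampV g') (s n))) < eps / 2).
    { intro n. destruct (IH n (eps / 2)) as [S0 [eta0 [He0 H0]]]. lra.
      exists (S0, eta0). simpl. auto. }
    apply functional_choice in IH'. destruct IH' as [F HF].
    exists (flat_map (fun n => fst (F n)) (seq 0 N)), (minl (map (fun n => snd (F n)) (seq 0 N))).
    split.
    { apply minl_pos. intros x Hx. apply in_map_iff in Hx. destruct Hx as [n [<- _]]. apply HF. }
    intros g g' H. simpl.
    change (sv (sdelta (fun n => Defs.eval (clampV g) (s n)))) with (sdel (fun n => sv (Defs.eval (clampV g) (s n)))).
    change (sv (sdelta (fun n => Defs.eval (clampV g') (s n)))) with (sdel (fun n => sv (Defs.eval (clampV g') (s n)))).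
    eapply Rle_lt_trans. apply (sdel_close N (eps / 2)). apply bnd_sv. apply bnd_sv. lra.
    2: lra.
    intros n Hn. left. apply HF. intros v Hv. eapply Rlt_le_trans. apply H.
    apply in_flat_map. exists n. split; auto. apply in_seq. lia.
    apply minl_le. apply in_map_iff. exists n. split; auto. apply in_seq. lia.
  - destruct (IHs (eps / 2)) as [S1 [e1 [He1 H1]]]. lra.
    destruct (IHu (eps / 2)) as [S2 [e2 [He2 H2]]]. lra.
    exists (S1 ++ S2), (Rmin e1 e2). split. apply Rmin_glb_lt; auto.
    intros g g' H. simpl.
    eapply Rle_lt_trans. apply rmin_lip.
    assert (A1 : Rabs (sv (Defs.eval (clampV g) s) - sv (Defs.eval (clampV g') s)) < eps / 2).
    { apply H1. intros v Hv. eapply Rlt_le_trans. apply H. apply in_or_app; auto. apply Rmin_l. }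
    assert (A2 : Rabs (sv (Defs.eval (clampV g) u) - sv (Defs.eval (clampV g') u)) < eps / 2).
    { apply H2. intros v Hv. eapply Rlt_le_trans. apply H. apply in_or_app; auto. apply Rmin_r. }
    eapply Rle_lt_trans. 2: { replace eps with (eps / 2 + eps / 2) by field. apply (Rplus_lt_compat _ _ _ _ A1 A2). }
    replace (sv (Defs.eval (clampV g) s) + sv (Defs.eval (clampV g) u) -
      (sv (Defs.eval (clampV g') s) + sv (Defs.eval (clampV g') u))) with
      ((sv (Defs.eval (clampV g) s) - sv (Defs.eval (clampV g') s)) + (sv (Defs.eval (clampV g) u) - sv (Defs.eval (clampV g') u))) by ring.
    apply Rabs_triang.
  - destruct (IHs eps Heps) as [S1 [e1 [He1 H1]]].
    exists S1, e1. split; auto. intros g g' H. simpl.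
    replace (1 - sv (Defs.eval (clampV g) s) - (1 - sv (Defs.eval (clampV g') s))) with
      (- (sv (Defs.eval (clampV g) s) - sv (Defs.eval (clampV g') s))) by ring.
    rewrite Rabs_Ropp. auto.
  - exists nil, 1. split. lra. intros. simpl.
    unfold Rminus; rewrite Rplus_opp_r, Rabs_R0. auto.
Qed.

End UC.
Import UC.

Module Bridge.
Local Open Scope R_scope.

Section Bridge.
Variable A : DeltaAlgebra.
Variable M : A -> Prop.
Hypothesis HM : maxideal A M.

Definition Hh (a : A) : StdA := exist _ (h A M HM a) (h_bounds A M HM a).

Lemma h_delta_sdel (y : nat -> A) : h A M HM (delta A y) = sdel (fun n => h A M HM (y n)).
Proof.
  symmetry. unfold sdel. apply is_series_unique. apply is_series_Reals.
  apply h_delta.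
Qed.

Lemma Hh_eval V (f : V -> A) (t : term V) : Hh (Defs.eval f t) = Defs.eval (fun v => Hh (f v)) t.
Proof.
  induction t as [v | s IH | s IHs u IHu | s IHs |]; simpl.
  - reflexivity.
  - apply I01_eq. unfold Hh at 1. unfold sv at 1. simpl proj1_sig.
    rewrite h_delta_sdel. change (sv (sdelta (fun n => Defs.eval (fun v => Hh (f v)) (s n))))
      with (sdel (fun n => sv (Defs.eval (fun v => Hh (f v)) (s n)))).
    apply sdel_ext. intro n. rewrite <- IH. reflexivity.
  - apply I01_eq. rewrite <- IHs, <- IHu. unfold Hh; unfold sv; simpl. apply h_op.
  - apply I01_eq. rewrite <- IHs. unfold Hh; unfold sv; simpl. apply h_neg.
  - apply I01_eq. unfold Hh; unfold sv; simpl. apply h_z.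
Qed.
End Bridge.

Lemma sat_to_std (HZ : ZornStmt) V (l : equation V -> Prop) :
  satisfiable l -> exists g : V -> StdA, @models V StdA g l.
Proof.
  intros [A [Hnt [f Hf]]].
  destruct (exists_maxideal A HZ (nontriv_e1 A Hnt)) as [M HM].
  exists (fun v => Hh A M HM (f v)). intros e He.
  rewrite <- !Hh_eval. f_equal. apply Hf; auto.
Qed.

End Bridge.
Import Bridge.

From mathcomp Require Import all_boot all_order all_algebra.
From mathcomp Require Import classical_sets boolp topology normedtype Rstruct Rstruct_topology.
Import ArrowAsProduct.
Local Open Scope classical_set_scope.
Local Open Scope R_scope.

Lemma K_compact (I : eqType) : compact [set f : I -> R | forall i, `[0%R, 1%R]%classic (f i)].
Proof. apply: (@tychonoff I (fun _ => R) (fun _ => `[0%R, 1%R]%classic)) => i. exact: segment_compact. Qed.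

Lemma itv01 (x : R) : `[0%R, 1%R]%classic x <-> 0 <= x <= 1.
Proof.
  rewrite /= in_itv /=. split. by move/andP=> [/RleP H1 /RleP H2].
  by move=> [H1 H2]; apply/andP; split; apply/RleP.
Qed.

Lemma nbhs_coord (I : eqType) (L : list I) (eta : R) (p : I -> R) : 0 < eta ->
  nbhs p [set f : I -> R | forall v, In v L -> Rabs (f v - p v) < eta].
Proof.
  intro He. induction L as [|v L IH].
  - have HT : nbhs p (@setT (I -> R)) by exact: filterT.
    apply: filterS HT. by move=> f _ v [].
  - have H1 : nbhs p [set f : I -> R | Rabs (f v - p v) < eta].
    { have Hb : nbhs (p v) (ball (p v) eta).
      { apply/nbhs_ballP. exists eta => /=. by apply/RltP. by move=> y. }
      have H2 : nbhs p ((fun f : I -> R => f v) @^-1` ball (p v) eta) by exact: (@proj_continuous I (fun _ => R) v p _ Hb).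
      apply: filterS H2 => f /=. rewrite /ball /=. move/RltP => H.
      rewrite -Rabs_Ropp Ropp_minus_distr. exact: H. }
    apply: filterS (filterI H1 IH). move=> f [Hf1 Hf2] w [<-|Hw]. exact: Hf1. exact: Hf2.
Qed.

Theorem std_compact (V : Type) (Sig : equation V -> Prop) :
  (forall l : list (equation V), (forall e, In e l -> Sig e) ->
     exists g : V -> StdA, @models V StdA g (fun e => In e l)) ->
  exists g : V -> StdA, @models V StdA g Sig.
Proof.
  move=> Hfin.
  pose I := {classic V}.
  pose Kset := [set f : I -> R | forall i, `[0%R, 1%R]%classic (f i)].
  pose C := fun l : list (equation V) =>
    [set f : I -> R | Kset f /\ @models V StdA (clampV f) (fun e => In e l)].
  pose D := [set l : list (equation V) | forall e, In e l -> Sig e].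
  have FF : Filter (filter_from D C).
  { apply: filter_from_filter. by exists nil => e [].
    move=> i j Di Dj. exists (i ++ j).
    { move=> e He. case: (in_app_or _ _ _ He) => H; [exact: (Di e H) | exact: (Dj e H)]. }
    move=> f [Kf Hf]. split; split => //; move=> e He; apply: Hf; apply: in_or_app; by [left|right]. }
  have PF : ProperFilter (filter_from D C).
  { apply: filter_from_proper => l Dl. have [g0 Hg0] := Hfin l Dl.
    exists (fun v => sv (g0 v)). split. move=> i; apply/itv01; apply: sv_b.
    have -> : @clampV V (fun v => sv (g0 v)) = g0.
    { apply: functional_extensionality => v. apply: I01_eq. rewrite /sv /clampV /=.
      apply: clamp_id. apply: sv_b. }
    exact: Hg0. }
  have FK : filter_from D C Kset. { exists nil. by move=> e []. by move=> f []. }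
  have [p [Kp clp]] := @K_compact I (filter_from D C) PF FK.
  exists (clampV p). move=> e He. apply: NNPP => Hne.
  set a := sv (Defs.eval (clampV p) (fst e)).
  set b := sv (Defs.eval (clampV p) (snd e)).
  have Hd : 0 < Rabs (a - b).
  { apply: Rabs_pos_lt => H. apply: Hne. apply: I01_eq. rewrite -/a -/b. lra. }
  have [S1 [e1 [He1 H1]]] := UC V (fst e) (Rabs (a - b) / 3) ltac:(lra).
  have [S2 [e2 [He2 H2]]] := UC V (snd e) (Rabs (a - b) / 3) ltac:(lra).
  have Hn := nbhs_coord I (S1 ++ S2) (Rmin e1 e2) p (Rmin_glb_lt _ _ _ He1 He2).
  have FC : filter_from D C (C (e :: nil)).
  { exists (e :: nil) => //. move=> e' [<-|[]]. exact: He. }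
  have [f [[Kf Hf] Nf]] := clp _ _ FC Hn.
  pose g : V -> R := f.
  have Heq : Defs.eval (clampV g) e.1 = Defs.eval (clampV g) e.2 := Hf e (or_introl erefl).
  have A1 : Rabs (sv (Defs.eval (clampV g) (fst e)) - a) < Rabs (a - b) / 3.
  { apply: H1 => v Hv. apply: Rlt_le_trans. apply: Nf. apply: in_or_app. by left. apply: Rmin_l. }
  have A2 : Rabs (sv (Defs.eval (clampV g) (snd e)) - b) < Rabs (a - b) / 3.
  { apply: H2 => v Hv. apply: Rlt_le_trans. apply: Nf. apply: in_or_app. by right. apply: Rmin_r. }
  rewrite Heq in A1. move: Hd A1 A2. clearbody a b. 
  generalize (sv (Defs.eval (clampV g) (snd e))) => x. rewrite /Rabs.
  repeat case: Rcase_abs => ?.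
  all: move=> *; lra.
Qed.


Lemma zorn_ok : ZornStmt.
Proof.
  move=> T P HP.
  have H0 : forall F : set (set T), F `<=` P -> total_on F subset -> P (\bigcup_(X in F) X).
  { move=> F FP Ftot.
    have -> : (\bigcup_(X in F) X) = (fun t => exists X, F X /\ X t).
    { apply: functional_extensionality => t. apply: propositional_extensionality.
      split. by move=> [X FX Xt]; exists X. by move=> [X [FX Xt]]; exists X. }
    apply: HP. exact: FP. move=> X Y FX FY. exact: (Ftot X Y FX FY). }
  have [M [PM Mmax]] := Zorn_bigcup H0.
  exists M; split => // B MB [t [Bt Mt]] PB. apply: (Mmax B) => //. split.
  exact: MB. move=> BM. apply: Mt. exact: BM.
Qed.

Theorem mainTheorem1 (V : Type) (Sigma : equation V -> Prop) :
  satisfiable Sigma <->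
  (forall l : list (equation V),
     (forall e, In e l -> Sigma e) -> satisfiable (fun e => In e l)).
Proof.
  split.
  - move=> [A [Hnt [f Hf]]] l Hl. exists A. split => //. exists f. move=> e He. apply: Hf. exact: Hl.
  - move=> H. have [g Hg] := std_compact V Sigma (fun l Hl => sat_to_std zorn_ok V _ (H l Hl)).
    exists StdA. split. exact: StdA_nontriv. by exists g.
Qed.
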